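(* For every semistandard hook-valued tableau $T$, the tableau $P(T)$ (the first component of the uncrowding map $\mathcal U(T)=(P(T),Q(T))$) is a set-valued tableau, i.e. a hook-valued tableau with arm excess $0$.
   Context: French notation: row $1$ is the bottom row, rows are numbered upward, columns from left to right; cell $(r,c)$ lies in row $r$ and column $c$. A semistandard tableau of hook shape $U$ consists of a hook entry $x$, a leg $\ell_1<\dots<\ell_p$ above $x$ with $x<\ell_1$, and an arm $a_1\le\dots\le a_q$ to the right of $x$ with $x\le a_1$ ($p,q\ge0$, positive integers). A (semistandard) hook-valued tableau (HVT) of partition shape $\lambda$ is a filling of the cells of $\lambda$ by such hook tableaux such that $\max(A)\le\min(B)$ whenever the cell of $A$ is left of the cell of $B$ in the same row, and $\max(A)<\min(C)$ whenever the cell of $A$ is below the cell of $C$ in the same column. Write $\mathsf H_T(r,c),\mathsf L_T(r,c),\mathsf A_T(r,c)$ for hook entry, leg, arm of cell $(r,c)$. Arm excess = total number of arm entries; a set-valued tableau is an HVT of arm excess $0$. Uncrowding bumping $\mathcal V_b$: if arm excess of $T$ is $0$, $\mathcal V_b(T)=T$. Otherwise let $c$ be the largest index of a column containing a cell with nonempty arm; among such cells in column $c$ let $(r,c)$ be the one whose arm contains the largest value. Let $a$ be the largest arm entry of $(r,c)$, $\ell$ its largest leg entry, and $(a,\ell]\cap\mathsf L_T(r,c)$ the set of leg entries $x$ of $(r,c)$ with $a<x\le\ell$. In column $c+1$ find the smallest entry $\ge a$. If none exists, attach a new empty cell on top of column $c+1$, with row $\tilde r$, and let $k$ be empty; otherwise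 let $k$ be this entry and $(\tilde r,c+1)$ its cell. (a) If $\tilde r\ne r$: remove $a$ from the arm of $(r,c)$, put $a$ in the position of $k$ in $(\tilde r,c+1)$ (as hook entry if the cell is new), append $k$ (if nonempty) to the arm of $(\tilde r,c+1)$. (b) If $\tilde r=r$: move $(a,\ell]\cap\mathsf L_T(r,c)$ from the leg of $(r,c)$ into the leg of $(r,c+1)$, remove $a$ from the arm of $(r,c)$, replace the hook entry of $(r,c+1)$ by $a$, and append $k$ (if nonempty) to the arm of $(r,c+1)$. Uncrowding insertion: $\mathcal V(T)=\mathcal V_b^d(T)$ where $d\ge1$ is minimal such that $\mathsf{shape}(\mathcal V_b^d(T))\neq\mathsf{shape}(\mathcal V_b^{d-1}(T))$ or $\mathcal V_b^d(T)=\mathcal V_b^{d-1}(T)$. Uncrowding map: for $T\in\mathsf{HVT}(\lambda)$ with arm excess $\alpha$, set $P_0=T$ and $Q_0$ the empty tableau of shape $\lambda/\lambda$; for $1\le i\le\alpha$ let $P_i=\mathcal V(P_{i-1})$, let $c$ be the index of the rightmost column of $P_{i-1}$ containing a cell with nonzero arm excess and $\tilde c$ the column of the cell $\mathsf{shape}(P_i)/\mathsf{shape}(P_{i-1})$; $Q_i$ is $Q_{i-1}$ with this cell added and filled with $\tilde c-c$. Then $\mathcal U(T)=(P(T),Q(T)):=(P_\alpha,Q_\alpha)$. *)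

(* Defs.v *)
From HB Require Import structures.
From mathcomp Require Import all_boot all_order.
From mathcomp Require Import finmap.

Set Implicit Arguments.
Unset Strict Implicit.
Unset Printing Implicit Defensive.

Local Open Scope fset_scope.
Local Open Scope fmap_scope.

(* A cell content is (x, (leg, arm)) : hook entry x, the leg           *)
(* l_1 < ... < l_p (listed bottom to top) and the arm a_1 <= ... <= a_q *)
(* (listed left to right).                                             *)
Definition hcell := (nat * (seq nat * seq nat))%type.

Definition hookE (X : hcell) : nat := X.1.
Definition legE (X : hcell) : seq nat := X.2.1.
Definition armE (X : hcell) : seq nat := X.2.2.
Definition mkcell (x : nat) (l a : seq nat) : hcell := (x, (l, a)).

Definition entries (X : hcell) : seq nat := hookE X :: legE X ++ armE X.

Definition seqmax (s : seq nat) : nat := foldr maxn 0 s.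
Definition seqmin (s : seq nat) : nat :=
  match s with [::] => 0 | x :: s' => foldr minn x s' end.

Definition is_hook_tab (X : hcell) : bool :=
  [&& 0 < hookE X, sorted ltn (hookE X :: legE X) & sorted leq (hookE X :: armE X)].

(* Hook-valued tableaux: finite maps from cells (r, c) (row r,         *)
(* column c, both 1-indexed, French notation: row 1 at the bottom) to  *)
(* hook tableaux.                                                      *)
Definition tab := {fmap (nat * nat) -> hcell}.

Definition shape (T : tab) : {fset (nat * nat)} := domf T.
Definition keys (T : tab) : seq (nat * nat) := enum_fset (domf T).
Definition getc (T : tab) (k : nat * nat) : hcell :=
  odflt (mkcell 0 [::] [::]) T.[? k].

Definition is_partition_shape (S : {fset (nat * nat)}) : bool :=
  [forall k : S, [&& 0 < (val k).1, 0 < (val k).2,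
     ((val k).1 == 1) || (((val k).1.-1, (val k).2) \in S) &
     ((val k).2 == 1) || (((val k).1, (val k).2.-1) \in S)]].

Definition is_HVT (T : tab) : bool :=
  [&& is_partition_shape (shape T),
      all (fun k => is_hook_tab (getc T k)) (keys T),
      all (fun k => all (fun k' =>
         ((k.1 == k'.1) && (k.2 < k'.2)) ==>
           (seqmax (entries (getc T k)) <= seqmin (entries (getc T k'))))
         (keys T)) (keys T) &
      all (fun k => all (fun k' =>
         ((k.2 == k'.2) && (k.1 < k'.1)) ==>
           (seqmax (entries (getc T k)) < seqmin (entries (getc T k'))))
         (keys T)) (keys T)].

Definition arm_excess (T : tab) : nat :=
  \sum_(k <- keys T) size (armE (getc T k)).

Definition is_set_valued (T : tab) : bool := is_HVT T && (arm_excess T == 0).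

Definition armkeys (T : tab) : seq (nat * nat) :=
  [seq k <- keys T | armE (getc T k) != [::]].

Definition arm_col (T : tab) : nat := \max_(k <- armkeys T) k.2.

Definition argmax {K : Type} (f : K -> nat) (s : seq K) : option K :=
  foldr (fun k acc => match acc with
                      | None => Some k
                      | Some k' => if f k' < f k then Some k else Some k'
                      end) None s.

Definition place_and_bump (Y : hcell) (k a : nat) : hcell :=
  let Y' :=
    if hookE Y == k then mkcell a (legE Y) (armE Y)
    else if k \in legE Y then mkcell (hookE Y) (sort leq (a :: rem k (legE Y))) (armE Y)
    else mkcell (hookE Y) (legE Y) (sort leq (a :: rem k (armE Y))) in
  mkcell (hookE Y') (legE Y') (sort leq (k :: armE Y')).

Definition Vb (T : tab) : tab :=
  let c0 := arm_col T in
  match argmax (fun k => seqmax (armE (getc T k)))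
               [seq k <- armkeys T | k.2 == c0] with
  | None => T   (* arm excess 0 *)
  | Some (r, c) =>
    let X := getc T (r, c) in
    let a := seqmax (armE X) in
    let l := seqmax (legE X) in
    let moved := [seq x <- legE X | (a < x) && (x <= l)] in
    let col := [seq k <- keys T | k.2 == c.+1] in
    let bigger :=
      [seq x <- flatten [seq entries (getc T k) | k <- col] | a <= x] in
    (* kopt = the smallest entry >= a in column c+1 (if any), rt = its row,
       or the row of a new cell on top of column c+1 *)
    let kopt := if bigger is [::] then None else Some (seqmin bigger) in
    let rt := match kopt with
              | None => (\max_(k <- col) k.1).+1
              | Some kk =>
                  match [seq k <- col | kk \in entries (getc T k)] with
                  | k0 :: _ => k0.1
                  | [::] => 0
                  end
              end in
    let Y := getc T (rt, c.+1) in
    if rt != r then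
      let Y' := match kopt with
                | None => mkcell a [::] [::]
                | Some kk => place_and_bump Y kk a
                end in
      T.[(r, c) <- mkcell (hookE X) (legE X) (rem a (armE X))]
       .[(rt, c.+1) <- Y']
    else
      let Yl := if kopt is None then [::] else legE Y in
      let Ya := if kopt is None then [::] else armE Y in
      let Y' := mkcell a (sort leq (Yl ++ moved))
                  (match kopt with None => Ya | Some kk => sort leq (kk :: Ya) end) in
      T.[(r, c) <- mkcell (hookE X) [seq x <- legE X | ~~ ((a < x) && (x <= l))]
                              (rem a (armE X))]
       .[(r, c.+1) <- Y']
  end.

(* Uncrowding insertion V(T) = V_b^d(T), d >= 1 minimal such that the  *)
(* shape changes or V_b^d(T) = V_b^(d-1)(T).  Stated as a relation     *)
(* (V T U means U = V(T)); it is functional since V_b is a function.   *)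
Definition V_stop (T : tab) (d : nat) : bool :=
  (shape (iter d Vb T) != shape (iter d.-1 Vb T)) || (iter d Vb T == iter d.-1 Vb T).

Definition V_rel (T U : tab) : Prop :=
  exists d, [/\ 0 < d, V_stop T d,
               (forall d', 0 < d' < d -> ~~ V_stop T d') & U = iter d Vb T].

(* P(T): P_0 = T, P_i = V(P_(i-1)) for 1 <= i <= alpha = arm_excess T,
   P(T) = P_alpha.  (The recording tableau Q is irrelevant here.) *)
Definition uncrowd_P (T P : tab) : Prop :=
  exists s : seq tab,
    [/\ size s = (arm_excess T).+1,
        nth T s 0 = T,
        (forall i, 0 < i <= arm_excess T -> V_rel (nth T s i.-1) (nth T s i)) &
        P = nth T s (arm_excess T)].

(* Main.v *)
Require Import Defs.
From mathcomp Require Import all_boot finmap zify.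
Set Implicit Arguments.
Unset Strict Implicit.
Unset Printing Implicit Defensive.

Section PartA.
Local Open Scope fset_scope.
Local Open Scope fmap_scope.

Lemma seqmax_le s B : (seqmax s <= B) = all (fun x => x <= B) s.
Proof. by elim: s => //= x s IH; rewrite geq_max IH. Qed.

Lemma le_seqmax s x : x \in s -> x <= seqmax s.
Proof.
elim: s => //= y s IH; rewrite inE => /orP[/eqP->|/IH h]; first exact: leq_maxl.
exact: leq_trans h (leq_maxr _ _).
Qed.

Lemma seqmax_mem s : s != [::] -> seqmax s \in s.
Proof.
elim: s => // x s IH _; case: s IH => [|y s] IH; first by rewrite /= maxn0 inE.
have -> : seqmax (x :: y :: s) = maxn x (seqmax (y :: s)) by [].
rewrite inE; case: (leqP x (seqmax (y :: s))) => h.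
  by rewrite IH ?orbT.
by rewrite eqxx.
Qed.

Lemma seqmin_ge x s B : (B <= seqmin (x :: s)) = all (fun y => B <= y) (x :: s).
Proof.
rewrite /=; elim: s => /= [|y s IH]; first by rewrite andbT.
by rewrite leq_min IH andbCA.
Qed.

Lemma seqmin_le x s y : y \in x :: s -> seqmin (x :: s) <= y.
Proof.
move=> hy; have: all (fun z => seqmin (x :: s) <= z) (x :: s) by rewrite -seqmin_ge.
by move/allP; apply.
Qed.

Lemma entriesE X : entries X = hookE X :: legE X ++ armE X. Proof. by []. Qed.

Lemma mem_entries X y : (y \in entries X) = [|| y == hookE X, y \in legE X | y \in armE X].
Proof. by rewrite entriesE inE mem_cat. Qed.

Definition mx X := seqmax (entries X).
Definition mn X := seqmin (entries X).

Lemma le_mx X y : y \in entries X -> y <= mx X.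
Proof. exact: le_seqmax. Qed.

Lemma mx_le X B : (mx X <= B) = all (fun y => y <= B) (entries X).
Proof. exact: seqmax_le. Qed.

Lemma mn_ge X B : (B <= mn X) = all (fun y => B <= y) (entries X).
Proof. by rewrite /mn entriesE seqmin_ge. Qed.

Lemma mn_le X y : y \in entries X -> mn X <= y.
Proof. by rewrite /mn entriesE; apply: seqmin_le. Qed.

Lemma hook_tabE x L A :
  is_hook_tab (mkcell x L A) =
  [&& 0 < x, all (ltn x) L, sorted ltn L, all (leq x) A & sorted leq A].
Proof.
rewrite /is_hook_tab /= (path_sortedE ltn_trans) (path_sortedE leq_trans).
by rewrite !andbA.
Qed.

Lemma hook_tabE' X : is_hook_tab X =
  [&& 0 < hookE X, all (ltn (hookE X)) (legE X), sorted ltn (legE X),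
      all (leq (hookE X)) (armE X) & sorted leq (armE X)].
Proof. by case: X => x [L A]; rewrite -hook_tabE. Qed.

Lemma mn_hook X : is_hook_tab X -> mn X = hookE X.
Proof.
rewrite hook_tabE' => /and5P[_ hL _ hA _]; apply/eqP; rewrite eqn_leq.
rewrite mn_le ?mem_entries ?eqxx //= mn_ge entriesE /= leqnn /= all_cat.
by rewrite (sub_all _ hL) ?(sub_all _ hA) // => y /ltnW.
Qed.

Lemma hook_le_mx X : hookE X <= mx X.
Proof. by apply: le_mx; rewrite mem_entries eqxx. Qed.

Lemma mn_le_mx X : mn X <= mx X.
Proof. by apply: leq_trans (hook_le_mx X); apply: mn_le; rewrite mem_entries eqxx. Qed.

End PartA.
Section PartB.
Local Open Scope fset_scope.
Local Open Scope fmap_scope.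

Lemma getc_set (T : tab) k0 v k :
  getc T.[k0 <- v] k = if k == k0 then v else getc T k.
Proof. by rewrite /getc fnd_set; case: eqP. Qed.

Definition partok (S : {fset (nat * nat)}) := forall k, k \in S ->
  [&& 0 < k.1, 0 < k.2, (k.1 == 1) || ((k.1.-1, k.2) \in S) &
     (k.2 == 1) || ((k.1, k.2.-1) \in S)].
Definition hookok (T : tab) := forall k, k \in domf T -> is_hook_tab (getc T k).
Definition rowok (T : tab) := forall k k', k \in domf T -> k' \in domf T ->
  k.1 = k'.1 -> k.2 < k'.2 -> mx (getc T k) <= mn (getc T k').
Definition colok (T : tab) := forall k k', k \in domf T -> k' \in domf T ->
  k.2 = k'.2 -> k.1 < k'.1 -> mx (getc T k) < mn (getc T k').

Lemma partP S : is_partition_shape S <-> partok S.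
Proof.
split.
  by move/forallP=> h k kS; exact: (h [` kS]).
by move=> h; apply/forallP => k; apply: h (fsvalP k).
Qed.

Lemma HVTP T : is_HVT T <-> [/\ partok (domf T), hookok T, rowok T & colok T].
Proof.
rewrite /is_HVT; split.
  case/and4P => [/partP P H R C]; split => //.
  - by move=> k kT; exact: (allP H k kT).
  - move=> k k' kT k'T e l; have := allP (allP R k kT) k' k'T.
    by rewrite e eqxx l.
  - move=> k k' kT k'T e l; have := allP (allP C k kT) k' k'T.
    by rewrite e eqxx l.
case=> P H R C; apply/and4P; split => //.
- exact/partP.
- by apply/allP => k kT; exact: H.
- apply/allP => k kT; apply/allP => k' k'T; apply/implyP => /andP[/eqP e l].
  exact: R.
- apply/allP => k kT; apply/allP => k' k'T; apply/implyP => /andP[/eqP e l].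
  exact: C.
Qed.

Lemma part_down S r c n : partok S -> (r, c) \in S -> 0 < r - n -> (r - n, c) \in S.
Proof.
move=> P; elim: n => [|n IH] rc; first by rewrite subn0.
rewrite subnS => h.
have h' : 0 < r - n by move: h; case: (r - n).
have := P _ (IH rc h') => /and4P[_ _ /orP[/eqP /= e|//] _].
by rewrite e in h.
Qed.

Lemma part_down' S r c r' : partok S -> (r, c) \in S -> 0 < r' <= r -> (r', c) \in S.
Proof.
move=> P rc /andP[r0 le]; have -> : r' = r - (r - r') by rewrite subKn.
by apply: part_down => //; rewrite subKn.
Qed.

Lemma part_left S r c n : partok S -> (r, c) \in S -> 0 < c - n -> (r, c - n) \in S.
Proof.
move=> P; elim: n => [|n IH] rc; first by rewrite subn0.
rewrite subnS => h.
have h' : 0 < c - n by move: h; case: (c - n).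
have := P _ (IH rc h') => /and4P[_ _ _ /orP[/eqP /= e|//]].
by rewrite e in h.
Qed.

Lemma part_left' S r c c' : partok S -> (r, c) \in S -> 0 < c' <= c -> (r, c') \in S.
Proof.
move=> P rc /andP[c0 le]; have -> : c' = c - (c - c') by rewrite subKn.
by apply: part_left => //; rewrite subKn.
Qed.

Lemma part_pos S k : partok S -> k \in S -> 0 < k.1 /\ 0 < k.2.
Proof. by move=> P /P /and4P[]. Qed.

Lemma NW T p q : is_HVT T -> p \in domf T -> q \in domf T -> p != q ->
  p.1 <= q.1 -> p.2 <= q.2 -> mx (getc T p) <= mn (getc T q).
Proof.
case/HVTP => P H R C; case: p q => r c [r' c'] pT qT ne /= le1 le2.
case: (ltngtP r r') le1 => // [lt1|e1] _; last first.
  subst r'; case: (ltngtP c c') le2 => // [lt2|e2] _; first exact: R.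
  by subst c'; rewrite eqxx in ne.
case: (ltngtP c c') le2 => // [lt2|e2] _; last by subst c'; apply: ltnW; apply: C.
have rc' : (r, c') \in domf T.
  have [r0 _] := part_pos P pT.
  by apply: part_down' qT _ => //; rewrite r0 ltnW.
have h1 := R (r, c) (r, c') pT rc' erefl lt2.
have h2 := C (r, c') (r', c') rc' qT erefl lt1.
have h3 := mn_le_mx (getc T (r, c')).
apply: leq_trans h1 _; apply: ltnW; exact: leq_ltn_trans h3 h2.
Qed.

End PartB.
Section PartC.
Local Open Scope fset_scope.
Local Open Scope fmap_scope.

Lemma update_HVT (T : tab) p X' q Y' :
  is_HVT T -> p \in domf T -> p.2 < q.2 ->
  is_hook_tab X' -> mn (getc T p) <= mn X' -> mx X' <= mx (getc T p) ->
  is_hook_tab Y' ->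
  partok (q |` domf T) ->
  (forall k, k \in domf T -> k != p -> k != q -> k.1 = q.1 -> k.2 < q.2 ->
     mx (getc T k) <= mn Y') ->
  (forall k, k \in domf T -> k != p -> k != q -> k.1 = q.1 -> q.2 < k.2 ->
     mx Y' <= mn (getc T k)) ->
  (forall k, k \in domf T -> k != p -> k != q -> k.2 = q.2 -> k.1 < q.1 ->
     mx (getc T k) < mn Y') ->
  (forall k, k \in domf T -> k != p -> k != q -> k.2 = q.2 -> q.1 < k.1 ->
     mx Y' < mn (getc T k)) ->
  (p.1 = q.1 -> mx X' <= mn Y') ->
  is_HVT T.[p <- X'].[q <- Y'].
Proof.
move=> /HVTP[P H R C] pT lt2 hX mnX mxX hY Pq RL RR CB CA XY.
have pq : p != q by apply/eqP => e; rewrite e ltnn in lt2.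
have dom : domf T.[p <- X'].[q <- Y'] = q |` domf T.
  by rewrite !dom_setf (mem_fset1U pT).
have memT k : k \in domf T.[p <- X'].[q <- Y'] = (k == q) || (k \in domf T).
  by rewrite dom !inE.
have gT k : getc T.[p <- X'].[q <- Y'] k =
   if k == q then Y' else if k == p then X' else getc T k.
  by rewrite !getc_set.
apply/HVTP; split.
- by rewrite dom.
- move=> k; rewrite memT gT; case: (eqVneq k q) => [_|kq] //= kT.
  by case: (eqVneq k p) => [_|_] //; exact: H.
- move=> k k'; rewrite !memT !gT.
  case: (eqVneq k q) => [->|kq] /=.
    case: (eqVneq k' q) => [->|k'q] /=; first by move=> _ _ _; rewrite ltnn.
    move=> _ k'T; case: (eqVneq k' p) => [->|k'p] /=.
      by move=> _ /(ltn_trans lt2); rewrite ltnn.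
    by move=> e l; apply: RR => //.
  move=> kT; case: (eqVneq k p) => [ekp|kp].
    subst k; case: (eqVneq k' q) => [->|k'q] /=; first by move=> _ e _; exact: XY.
    move=> k'T; case: (eqVneq k' p) => [->|k'p]; first by rewrite ltnn.
    move=> e l; apply: leq_trans mxX _; exact: R.
  case: (eqVneq k' q) => [->|k'q] /=; first by move=> _ e l; apply: RL.
  move=> k'T; case: (eqVneq k' p) => [->|k'p] e l.
    apply: leq_trans mnX; exact: R.
  exact: R.
- move=> k k'; rewrite !memT !gT.
  case: (eqVneq k q) => [->|kq] /=.
    case: (eqVneq k' q) => [->|k'q] /=; first by move=> _ _ _; rewrite ltnn.
    move=> _ k'T; case: (eqVneq k' p) => [->|k'p] /=.
      by move=> e; rewrite e ltnn in lt2.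
    by move=> e l; apply: CA => //.
  move=> kT; case: (eqVneq k p) => [ekp|kp].
    subst k; case: (eqVneq k' q) => [->|k'q] /=.
      by move=> _ e; rewrite e ltnn in lt2.
    move=> k'T; case: (eqVneq k' p) => [->|k'p]; first by rewrite ltnn.
    move=> e l; apply: leq_ltn_trans mxX _; exact: C.
  case: (eqVneq k' q) => [->|k'q] /=; first by move=> _ e l; apply: CB.
  move=> k'T; case: (eqVneq k' p) => [->|k'p] e l.
    apply: leq_trans mnX; exact: C.
  exact: C.
Qed.

End PartC.
Section PartD.
Local Open Scope fset_scope.


Lemma part_add S q : partok S -> 0 < q.1 -> 0 < q.2 ->
  (q.1 == 1) || ((q.1.-1, q.2) \in S) -> (q.2 == 1) || ((q.1, q.2.-1) \in S) ->
  partok (q |` S).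
Proof.
move=> P q1 q2 h1 h2 k; rewrite /partok in_fset1U => /orP[/eqP->|kS].
  by rewrite q1 q2 !in_fset1U; case/orP: h1 => -> ; case/orP: h2 => ->; rewrite ?orbT.
by case/and4P: (P k kS) => -> -> a b; rewrite !in_fset1U /=; case/orP: a => ->; case/orP: b => ->; rewrite ?orbT.
Qed.

Lemma aeE (T : tab) : arm_excess T = \sum_(k <- domf T) size (armE (getc T k)).
Proof. by []. Qed.

Lemma ae_set_in (T : tab) k v : k \in domf T ->
  (arm_excess (T.[k <- v]%fmap) + size (armE (getc T k)) = arm_excess T + size (armE v))%N.
Proof.
move=> kT; rewrite !aeE dom_setf (mem_fset1U kT).
rewrite (big_fsetD1 k kT) [in RHS](big_fsetD1 k kT) /= getc_set eqxx.
have -> : \sum_(i <- domf T `\ k) size (armE (getc T.[k <- v]%fmap i)) =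
          \sum_(i <- domf T `\ k) size (armE (getc T i)).
  apply: eq_fbigr => x; rewrite in_fsetD1 => /andP[xk _] _.
  by rewrite getc_set (negPf xk).
set S := \sum_(_ <- _) _. rewrite addnC addnA [in RHS]addnC [in RHS]addnA. by rewrite (addnC (size (armE v))).
Qed.

Lemma ae_set_new (T : tab) k v : k \notin domf T ->
  (arm_excess (T.[k <- v]%fmap) = arm_excess T + size (armE v))%N.
Proof.
move=> kT; rewrite !aeE dom_setf (big_fsetU1 _ _ kT) /= getc_set eqxx addnC.
congr addn; apply: eq_fbigr => x xT _.
rewrite getc_set; case: eqP => // e; by rewrite -e xT in kT.
Qed.

End PartD.
Section PartE.

Lemma mx_leP Z B : (forall y, y \in entries Z -> y <= B) -> mx Z <= B.
Proof. by move=> h; rewrite mx_le; apply/allP. Qed.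

Lemma sorted_ltn_sort s : uniq s -> sorted ltn (sort leq s).
Proof.
by move=> u; rewrite ltn_sorted_uniq_leq sort_uniq u sort_sorted //; exact: leq_total.
Qed.

Lemma sorted_leq_sort s : sorted leq (sort leq s).
Proof. by apply: sort_sorted; exact: leq_total. Qed.

Lemma uniq_ltn s : sorted ltn s -> uniq s.
Proof. by move/(sorted_uniq ltn_trans ltnn). Qed.

Lemma pab_spec Y kk a : is_hook_tab Y -> kk \in entries Y -> 0 < a -> a <= kk ->
  (forall y, y \in entries Y -> a <= y -> kk <= y) ->
  [/\ is_hook_tab (place_and_bump Y kk a),
      hookE (place_and_bump Y kk a) = (if hookE Y == kk then a else hookE Y),
      mx (place_and_bump Y kk a) <= mx Y &
      size (armE (place_and_bump Y kk a)) = (size (armE Y)).+1].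
Proof.
case: Y => h [L A'] hY kkY a0 akk kmin.
move: hY; rewrite hook_tabE => /and5P[h0 hL sL hA sA].
have kkmx : kk <= mx (mkcell h L A') by apply: le_mx.
have inE' y : y \in L -> y \in entries (mkcell h L A') by rewrite mem_entries => ->; rewrite orbT.
have inA y : y \in A' -> y \in entries (mkcell h L A') by rewrite mem_entries => ->; rewrite !orbT.
rewrite /place_and_bump /mkcell /hookE /legE /armE /=.
case: (eqVneq h kk) => [ehk|nhk] /=.
  subst kk; split => //.
  - rewrite hook_tabE' /hookE /legE /armE /=; apply/and5P; split; [done| | done | |].
    + by apply/allP => y /(allP hL); apply: leq_ltn_trans.
    + by apply/allP => y; rewrite mem_sort inE => /orP[/eqP->|/(allP hA)] //; apply: leq_trans.
    + exact: sorted_leq_sort.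
  - apply: mx_leP => y; rewrite mem_entries /= mem_sort inE.
    case/or4P => [/eqP->|/inE'/le_mx //|/eqP->//|/inA/le_mx//].
    exact: leq_trans akk kkmx.
  - by rewrite size_sort.
have kkh : h <= kk.
  move: kkY; rewrite mem_entries /= => /or3P[/eqP->//|/(allP hL)/ltnW//|/(allP hA)//].
have ha : h < a.
  rewrite ltnNge; apply/negP => ah.
  have := kmin h; rewrite mem_entries eqxx => /(_ erefl ah) kh.
  by move: nhk; rewrite eqn_leq kkh kh.
case: ifP => kL /=.
  have uL := uniq_ltn sL.
  split => //.
  - rewrite hook_tabE' /hookE /legE /armE /= h0 /= sorted_leq_sort andbT; apply/and3P; split.
    + by apply/allP => y; rewrite mem_sort inE => /orP[/eqP->//|/mem_rem/(allP hL)].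
    + apply: sorted_ltn_sort; rewrite /= rem_uniq // andbT.
      rewrite (mem_rem_uniq _ uL) inE; apply/negP => /andP[ak aL].
      have := kmin a (inE' _ aL) (leqnn a) => ka.
      by move: ak; rewrite eqn_leq akk ka.
    + by apply/allP => y; rewrite mem_sort inE => /orP[/eqP->|/(allP hA)//].
  - apply: mx_leP => y; rewrite mem_entries /= !mem_sort !inE.
    case/or3P => [/eqP->|/orP[/eqP->|/mem_rem/inE'/le_mx//]|/orP[/eqP->//|/inA/le_mx//]].
      by apply: leq_trans (hook_le_mx _).
    exact: leq_trans akk kkmx.
  - by rewrite size_sort.
have kA : kk \in A' by move: kkY; rewrite mem_entries /= kL eq_sym (negPf nhk).
split => //.
- rewrite hook_tabE' /hookE /legE /armE /= h0 hL sL sorted_leq_sort /= andbT.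
  apply/allP => y; rewrite !mem_sort !inE mem_sort inE => /or3P[/eqP->//|/eqP->|/mem_rem/(allP hA)//].
  exact: ltnW.
- apply: mx_leP => y; rewrite mem_entries /= !mem_sort !inE mem_sort inE.
  case/or3P => [/eqP->|/inE'/le_mx//|/or3P[/eqP->//|/eqP->|/mem_rem/inA/le_mx//]].
    by apply: hook_le_mx.
  exact: leq_trans akk kkmx.
- by rewrite size_sort /= size_sort /= size_rem //; case: (A') kA.
Qed.

End PartE.
Section PartF.

Definition step_ok (T T' : tab) (r c : nat) :=
 [/\ is_HVT T', size (armE (getc T' (r,c))) = (size (armE (getc T (r,c)))).-1 &
   (domf T' = domf T /\ arm_excess T' = arm_excess T /\
      exists2 k, k \in domf T' & (k.2 == c.+1) && (armE (getc T' k) != [::]))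
   \/ (domf T' != domf T /\ arm_excess T' = (arm_excess T).-1)].

Lemma armE_mk x L A : armE (mkcell x L A) = A. Proof. by []. Qed.
Lemma legE_mk x L A : legE (mkcell x L A) = L. Proof. by []. Qed.
Lemma hookE_mk x L A : hookE (mkcell x L A) = x. Proof. by []. Qed.
Definition mkE := (armE_mk, legE_mk, hookE_mk).

Section Step.
Variables (T : tab) (r c : nat).
Hypothesis hT : is_HVT T.
Hypothesis pT : (r, c) \in domf T.
Hypothesis Ane : armE (getc T (r, c)) != [::].
Local Notation X := (getc T (r,c)).
Local Notation a := (seqmax (armE X)).
Local Notation l := (seqmax (legE X)).
Local Notation M := [seq x <- legE X | (a < x) && (x <= l)].
Local Notation X1 := (mkcell (hookE X) (legE X) (rem a (armE X))).
Local Notation X2 := (mkcell (hookE X) [seq x <- legE X | ~~ ((a < x) && (x <= l))] (rem a (armE X))).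

Lemma hX : is_hook_tab X.
Proof. by case/HVTP: hT => _ H _ _; exact: H. Qed.

Lemma aA : a \in armE X.
Proof. exact: seqmax_mem. Qed.

Lemma Ale y : y \in armE X -> y <= a.
Proof. exact: le_seqmax. Qed.

Lemma xa : hookE X <= a.
Proof. by move: hX; rewrite hook_tabE' => /and5P[_ _ _ /allP h _]; exact: h aA. Qed.

Lemma x0 : 0 < hookE X.
Proof. by move: hX; rewrite hook_tabE' => /and5P[]. Qed.

Lemma a0 : 0 < a.
Proof. exact: leq_trans x0 xa. Qed.

Lemma a_mx : a <= mx X.
Proof. by apply: le_mx; rewrite mem_entries aA !orbT. Qed.

Lemma mnX : mn X = hookE X.
Proof. exact: mn_hook hX. Qed.

Lemma X1_hook : is_hook_tab X1.
Proof.
move: hX; rewrite !hook_tabE' !mkE /= => /and5P[-> -> -> hA sA] /=.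
apply/andP; split.
  by apply/allP => y /mem_rem /(allP hA).
exact: (@subseq_sorted _ leq leq_trans _ _ (rem_subseq _ _) sA).
Qed.

Lemma X2_hook : is_hook_tab X2.
Proof.
move: hX; rewrite !hook_tabE' !mkE /= => /and5P[-> hL sL hA sA] /=.
apply/and4P; split.
- by apply/allP => y; rewrite mem_filter => /andP[_ /(allP hL)].
- exact: (sorted_filter ltn_trans _ sL).
- by apply/allP => y /mem_rem /(allP hA).
- exact: (@subseq_sorted _ leq leq_trans _ _ (rem_subseq _ _) sA).
Qed.

Lemma X1_mn : mn X1 = hookE X.
Proof. exact: mn_hook X1_hook. Qed.

Lemma X2_mn : mn X2 = hookE X.
Proof. exact: mn_hook X2_hook. Qed.

Lemma X1_mx : mx X1 <= mx X.
Proof.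
apply: mx_leP => y; rewrite mem_entries !mkE /= => /or3P[/eqP->|yL|/mem_rem yA].
- exact: hook_le_mx.
- by apply: le_mx; rewrite mem_entries yL orbT.
- by apply: le_mx; rewrite mem_entries yA !orbT.
Qed.

Lemma X2_mx : mx X2 <= a.
Proof.
apply: mx_leP => y; rewrite mem_entries !mkE /= => /or3P[/eqP->|yL|/mem_rem yA].
- exact: xa.
- move: yL; rewrite mem_filter => /andP[h yL].
  by move: h; rewrite (le_seqmax yL) andbT -leqNgt.
- exact: Ale.
Qed.

Lemma X_size : size (rem a (armE X)) = (size (armE X)).-1.
Proof. by rewrite size_rem // aA. Qed.

Lemma left_le k : k \in domf T -> k != (r, c) -> k.1 <= r -> k.2 <= c ->
  mx (getc T k) <= hookE X.
Proof. by move=> kT kp h1 h2; rewrite -mnX; apply: NW. Qed.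

Lemma part0 : partok (domf T).
Proof. by case/HVTP: hT. Qed.

Lemma hookT k : k \in domf T -> is_hook_tab (getc T k).
Proof. by case/HVTP: hT => _ H _ _; exact: H. Qed.

Lemma rowT k k' : k \in domf T -> k' \in domf T -> k.1 = k'.1 -> k.2 < k'.2 ->
  mx (getc T k) <= mn (getc T k').
Proof. by case/HVTP: hT => _ _ R _; exact: R. Qed.

Lemma colT k k' : k \in domf T -> k' \in domf T -> k.2 = k'.2 -> k.1 < k'.1 ->
  mx (getc T k) < mn (getc T k').
Proof. by case/HVTP: hT => _ _ _ C; exact: C. Qed.

Lemma ent_ne Z : entries Z != [::]. Proof. by []. Qed.


Lemma szA : 0 < size (armE X).
Proof. by case: (armE X) Ane. Qed.

Lemma caseA_some rt kk :
  (rt, c.+1) \in domf T -> rt != r ->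
  kk \in entries (getc T (rt, c.+1)) -> a <= kk ->
  (forall k y, k \in domf T -> k.2 = c.+1 -> y \in entries (getc T k) -> a <= y -> kk <= y) ->
  step_ok T (T.[(r,c) <- X1].[(rt,c.+1) <- place_and_bump (getc T (rt,c.+1)) kk a])%fmap r c.
Proof.
move=> qT rtr kkY akk kmin.
have hY := hookT qT.
have [hY' hookY' mxY' szY'] :=
  pab_spec hY kkY a0 akk (fun y yY ay => kmin (rt, c.+1) y qT erefl yY ay).
have mnY := mn_hook hY.
have rtlt : rt < r.
  rewrite ltn_neqAle rtr /= leqNgt; apply/negP => rlt.
  have [/= r0 _] := part_pos part0 pT.
  have rc1 : (r, c.+1) \in domf T by apply: part_down' part0 qT _; rewrite r0 ltnW.
  have hZ := hookT rc1.
  have aZ : a <= hookE (getc T (r, c.+1)).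
    by rewrite -(mn_hook hZ); apply: leq_trans a_mx (rowT pT rc1 erefl (ltnSn c)).
  have ZE : hookE (getc T (r, c.+1)) \in entries (getc T (r, c.+1)) by rewrite mem_entries eqxx.
  have kkZ := kmin _ _ rc1 erefl ZE aZ.
  have cZ := colT rc1 qT erefl rlt.
  have := mn_le kkY; have := hook_le_mx (getc T (r, c.+1)).
  lia.
have below k : k \in domf T -> k.2 = c.+1 -> k.1 < rt -> mx (getc T k) < a.
  move=> kT k2 k1; rewrite ltnNge; apply/negP => amx.
  have kkm := kmin _ _ kT k2 (seqmax_mem (ent_ne _)) amx.
  have cY := colT kT qT k2 k1; have := mn_le kkY; rewrite /mx in cY; lia.
have pq : (r, c) != (rt, c.+1) by apply/eqP => -[_ /eqP]; rewrite eqn_leq ltnn andbF.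
split.
- apply: update_HVT => //.
  + exact: X1_hook.
  + by rewrite X1_mn mnX.
  + exact: X1_mx.
  + by rewrite (mem_fset1U qT); exact: part0.
  + move=> k kT kp kq /= k1 k2.
    have h : mx (getc T k) <= hookE X.
      by apply: left_le => //; rewrite k1; exact: ltnW.
    rewrite (mn_hook hY') hookY'; case: ifP => _; first exact: leq_trans h xa.
    by rewrite -mnY; apply: rowT.
  + move=> k kT _ _ k1 k2; apply: leq_trans mxY' _; exact: rowT qT kT (esym k1) k2.
  + move=> k kT _ _ k2 k1; rewrite (mn_hook hY') hookY'; case: ifP => _.
      exact: below.
    by rewrite -mnY; apply: colT.
  + move=> k kT _ _ k2 k1; apply: leq_ltn_trans mxY' _; exact: colT qT kT (esym k2) k1.
  + by move=> /= e; rewrite e eqxx in rtr.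
- by rewrite getc_set (negPf pq) getc_set eqxx armE_mk X_size.
- left; split; first by rewrite !dom_setf (mem_fset1U pT) (mem_fset1U qT).
  split.
    have e1 := ae_set_in X1 pT.
    have qT1 : (rt, c.+1) \in domf T.[(r, c) <- X1]%fmap by rewrite dom_setf in_fset1U qT orbT.
    have e2 := ae_set_in (place_and_bump (getc T (rt, c.+1)) kk a) qT1.
    move: e1 e2; rewrite getc_set eq_sym (negPf pq) armE_mk X_size szY'.
    have := szA; lia.
  exists (rt, c.+1); first by rewrite dom_setf in_fset1U eqxx.
  by rewrite getc_set eqxx eqxx /=; move: szY'; case: (armE _).
Qed.

Lemma mx1 x : mx (mkcell x [::] [::]) = x.
Proof. by rewrite /mx /= maxn0. Qed.
Lemma mn1 x : mn (mkcell x [::] [::]) = x.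
Proof. by []. Qed.

Lemma caseA_none rt :
  (forall k y, k \in domf T -> k.2 = c.+1 -> y \in entries (getc T k) -> y < a) ->
  (rt, c.+1) \notin domf T ->
  (forall k, k \in domf T -> k.2 = c.+1 -> k.1 < rt) ->
  0 < rt -> (rt == 1) || ((rt.-1, c.+1) \in domf T) -> rt != r ->
  step_ok T (T.[(r,c) <- X1].[(rt,c.+1) <- mkcell a [::] [::]])%fmap r c.
Proof.
move=> none qT rows rt0 hrt rtr.
have rtlt : rt < r.
  rewrite ltn_neqAle rtr /=.
  rewrite leqNgt; apply/negP => lt; move: hrt => /orP[/eqP e|rc1].
    have [/= r0 _] := part_pos part0 pT; move: lt; rewrite e ltnS leqn0 => /eqP r00.
    by rewrite r00 in r0.
  have [/= r0 _] := part_pos part0 pT.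
  have rc : (r, c.+1) \in domf T by apply: part_down' part0 rc1 _; rewrite r0 -ltnS (ltn_predK lt).
  have hZ := hookT rc.
  have aZ : a <= hookE (getc T (r, c.+1)).
    by rewrite -(mn_hook hZ); apply: leq_trans a_mx (rowT pT rc erefl (ltnSn c)).
  have := none _ (hookE (getc T (r, c.+1))) rc erefl; rewrite mem_entries eqxx => /(_ erefl).
  by rewrite ltnNge aZ.
have pq : (r, c) != (rt, c.+1) by apply/eqP => -[_ /eqP]; rewrite eqn_leq ltnn andbF.
have hY' : is_hook_tab (mkcell a [::] [::]) by rewrite hook_tabE a0.
split.
- apply: update_HVT => //.
  + exact: X1_hook.
  + by rewrite X1_mn mnX.
  + exact: X1_mx.
  + apply: part_add => //=; first exact: part0.
    apply/orP; right; apply: part_down' part0 pT _; rewrite rt0; exact: ltnW.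
  + move=> k kT kp kq /= k1 k2; rewrite mn1.
    have h : mx (getc T k) <= hookE X.
      by apply: left_le => //; rewrite k1; exact: ltnW.
    exact: leq_trans h xa.
  + move=> k kT _ _ /= k1 k2; exfalso; move/negP: qT; apply.
    have [_ k20] := part_pos part0 kT.
    rewrite -k1; case: k kT k1 k2 {k20} => k1' k2' kT /= k1 k2.
    by apply: part_left' part0 kT _; rewrite /= ltnW.
  + move=> k kT _ _ /= k2 k1; rewrite mn1.
    by apply: none kT k2 _; apply: seqmax_mem.
  + move=> k kT _ _ /= k2 k1; have := rows k kT k2; rewrite ltnNge ltnW //.
  + by move=> /= e; rewrite e eqxx in rtr.
- by rewrite getc_set (negPf pq) getc_set eqxx armE_mk X_size.
- right; split.
    apply/eqP => e; move/negP: qT; apply; rewrite -e dom_setf in_fset1U eqxx //.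
  have e1 := ae_set_in X1 pT.
  have qT1 : (rt, c.+1) \notin domf T.[(r, c) <- X1]%fmap.
    by rewrite dom_setf in_fset1U negb_or eq_sym pq qT.
  have e2 := ae_set_new (mkcell a [::] [::]) qT1.
  move: e1 e2; rewrite armE_mk X_size /=.
  have := szA; lia.
Qed.

Lemma uniqL : uniq (legE X).
Proof. by move: hX; rewrite hook_tabE' => /and5P[_ _ /uniq_ltn -> _ _]. Qed.

Lemma M_gt y : y \in M -> a < y.
Proof. by rewrite mem_filter => /andP[/andP[]]. Qed.

Lemma M_le y : y \in M -> y <= mx X.
Proof. by rewrite mem_filter => /andP[_ yL]; apply: le_mx; rewrite mem_entries yL orbT. Qed.

Lemma caseB_some kk :
  (r, c.+1) \in domf T -> kk \in entries (getc T (r, c.+1)) -> a <= kk ->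
  (forall k y, k \in domf T -> k.2 = c.+1 -> y \in entries (getc T k) -> a <= y -> kk <= y) ->
  step_ok T (T.[(r,c) <- X2].[(r,c.+1) <-
     mkcell a (sort leq (legE (getc T (r,c.+1)) ++ M))
              (sort leq (kk :: armE (getc T (r,c.+1))))])%fmap r c.
Proof.
move=> qT kkY akk kmin.
set Y := getc T (r, c.+1).
have hY := hookT qT.
have mnY := mn_hook hY.
have XY : mx X <= hookE Y by rewrite -mnY; apply: rowT pT qT erefl (ltnSn c).
have kkE : kk = hookE Y.
  apply/eqP; rewrite eqn_leq; apply/andP; split.
    by apply: kmin qT erefl _ _; rewrite ?mem_entries ?eqxx //; apply: leq_trans a_mx XY.
  by rewrite -mnY; apply: mn_le.
move: hY; rewrite hook_tabE' => /and5P[hY0 hLY sLY hAY sAY].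
set Y' := mkcell a _ _.
have hY' : is_hook_tab Y'.
  rewrite hook_tabE' !mkE a0 /= sorted_leq_sort andbT; apply/and3P; split.
  - apply/allP => y; rewrite mem_sort mem_cat => /orP[yL|/M_gt //].
    by apply: leq_ltn_trans akk _; rewrite kkE; apply: (allP hLY).
  - apply: sorted_ltn_sort; rewrite cat_uniq uniq_ltn //= filter_uniq ?uniqL // andbT.
    apply/hasPn => y /M_le yX; apply/negP => /(allP hLY) hy.
    by move: (leq_trans yX XY); rewrite leqNgt => /negP; apply; exact: hy.
  - apply/allP => y; rewrite mem_sort inE => /orP[/eqP->//|/(allP hAY) hy].
    by apply: leq_trans akk _; rewrite kkE.
have mnY' : mn Y' = a by rewrite (mn_hook hY').
have kkmx : kk <= mx Y by apply: le_mx.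
have mxY' : mx Y' <= mx Y.
  apply: mx_leP => y; rewrite mem_entries !mkE /= !mem_sort mem_cat inE.
  case/or4P => [/eqP->|/orP[yL|/M_le yX]|/eqP->//|yA].
  - exact: leq_trans akk kkmx.
  - by apply: le_mx; rewrite mem_entries yL orbT.
  - by apply: leq_trans yX (leq_trans XY (hook_le_mx _)).
  - by apply: le_mx; rewrite mem_entries yA !orbT.
have pq : (r, c) != (r, c.+1) by apply/eqP => -[/eqP]; rewrite eqn_leq ltnn andbF.
split.
- apply: update_HVT => //.
  + exact: X2_hook.
  + by rewrite X2_mn mnX.
  + exact: leq_trans X2_mx a_mx.
  + by rewrite (mem_fset1U qT); exact: part0.
  + move=> k kT kp kq /= k1 k2; rewrite mnY'.
    have h : mx (getc T k) <= hookE X by apply: left_le => //; rewrite k1.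
    exact: leq_trans h xa.
  + move=> k kT _ _ k1 k2; apply: leq_trans mxY' _; exact: rowT qT kT (esym k1) k2.
  + move=> k kT _ _ /= k2 k1; rewrite mnY' ltnNge; apply/negP => amx.
    have kkm := kmin _ _ kT k2 (seqmax_mem (ent_ne _)) amx.
    have cY := colT kT qT k2 k1; have := mn_le kkY; rewrite /mx in cY; lia.
  + move=> k kT _ _ k2 k1; apply: leq_ltn_trans mxY' _; exact: colT qT kT (esym k2) k1.
  + by move=> _; rewrite mnY'; exact: X2_mx.
- by rewrite getc_set (negPf pq) getc_set eqxx armE_mk X_size.
- left; split; first by rewrite !dom_setf (mem_fset1U pT) (mem_fset1U qT).
  split.
    have e1 := ae_set_in X2 pT.
    have qT1 : (r, c.+1) \in domf T.[(r, c) <- X2]%fmap by rewrite dom_setf in_fset1U qT orbT.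
    have e2 := ae_set_in Y' qT1.
    move: e1 e2; rewrite getc_set eq_sym (negPf pq) !armE_mk X_size size_sort /= -/Y.
    have := szA; lia.
  exists (r, c.+1); first by rewrite dom_setf in_fset1U eqxx.
  by rewrite getc_set eqxx eqxx /= armE_mk; apply/eqP => /(congr1 size); rewrite size_sort.
Qed.

Lemma caseB_none :
  (forall k y, k \in domf T -> k.2 = c.+1 -> y \in entries (getc T k) -> y < a) ->
  (r, c.+1) \notin domf T ->
  (forall k, k \in domf T -> k.2 = c.+1 -> k.1 < r) ->
  (r == 1) || ((r.-1, c.+1) \in domf T) ->
  step_ok T (T.[(r,c) <- X2].[(r,c.+1) <- mkcell a (sort leq M) [::]])%fmap r c.
Proof.
move=> none qT rows hrt.
set Y' := mkcell a _ _.
have hY' : is_hook_tab Y'.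
  rewrite hook_tabE' !mkE a0 /= andbT; apply/andP; split.
  - by apply/allP => y; rewrite mem_sort => /M_gt.
  - by apply: sorted_ltn_sort; rewrite filter_uniq ?uniqL.
have mnY' : mn Y' = a by rewrite (mn_hook hY').
have pq : (r, c) != (r, c.+1) by apply/eqP => -[/eqP]; rewrite eqn_leq ltnn andbF.
have [/= r0 _] := part_pos part0 pT.
split.
- apply: update_HVT => //.
  + exact: X2_hook.
  + by rewrite X2_mn mnX.
  + exact: leq_trans X2_mx a_mx.
  + apply: part_add => //=; first exact: part0.
    by rewrite pT orbT.
  + move=> k kT kp kq /= k1 k2; rewrite mnY'.
    have h : mx (getc T k) <= hookE X by apply: left_le => //; rewrite k1.
    exact: leq_trans h xa.
  + move=> k kT _ _ /= k1 k2; exfalso; move/negP: qT; apply.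
    rewrite -k1; case: k kT k1 k2 => k1' k2' kT /= k1 k2.
    by apply: part_left' part0 kT _; rewrite /= ltnW.
  + move=> k kT _ _ /= k2 k1; rewrite mnY'.
    by apply: none kT k2 _; apply: seqmax_mem.
  + move=> k kT _ _ /= k2 k1; have := rows k kT k2; rewrite ltnNge ltnW //.
  + by move=> _; rewrite mnY'; exact: X2_mx.
- by rewrite getc_set (negPf pq) getc_set eqxx armE_mk X_size.
- right; split.
    apply/eqP => e; move/negP: qT; apply; rewrite -e dom_setf in_fset1U eqxx //.
  have e1 := ae_set_in X2 pT.
  have qT1 : (r, c.+1) \notin domf T.[(r, c) <- X2]%fmap.
    by rewrite dom_setf in_fset1U negb_or eq_sym pq qT.
  have e2 := ae_set_new Y' qT1.
  move: e1 e2; rewrite !armE_mk X_size /=.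
  have := szA; lia.
Qed.

End Step.

End PartF.
Section PartG.
Local Open Scope fmap_scope.

Definition Vbody (T : tab) (r c : nat) : tab :=
    let X := getc T (r, c) in
    let a := seqmax (armE X) in
    let l := seqmax (legE X) in
    let moved := [seq x <- legE X | (a < x) && (x <= l)] in
    let col := [seq k <- keys T | k.2 == c.+1] in
    let bigger :=
      [seq x <- flatten [seq entries (getc T k) | k <- col] | a <= x] in
    let kopt := if bigger is [::] then None else Some (seqmin bigger) in
    let rt := match kopt with
              | None => (\max_(k <- col) k.1).+1
              | Some kk =>
                  match [seq k <- col | kk \in entries (getc T k)] with
                  | k0 :: _ => k0.1
                  | [::] => 0
                  end
              end in
    let Y := getc T (rt, c.+1) in
    if rt != r then
      let Y' := match kopt with
                | None => mkcell a [::] [::]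
                | Some kk => place_and_bump Y kk a
                end in
      T.[(r, c) <- mkcell (hookE X) (legE X) (rem a (armE X))]
       .[(rt, c.+1) <- Y']
    else
      let Yl := if kopt is None then [::] else legE Y in
      let Ya := if kopt is None then [::] else armE Y in
      let Y' := mkcell a (sort leq (Yl ++ moved))
                  (match kopt with None => Ya | Some kk => sort leq (kk :: Ya) end) in
      T.[(r, c) <- mkcell (hookE X) [seq x <- legE X | ~~ ((a < x) && (x <= l))]
                              (rem a (armE X))]
       .[(r, c.+1) <- Y'].

Lemma Vb_eq T : Vb T = match argmax (fun k => seqmax (armE (getc T k)))
               [seq k <- armkeys T | k.2 == arm_col T] with
  | None => T | Some (r, c) => Vbody T r c end.
Proof. by []. Qed.

Lemma max_att (K : eqType) (s : seq K) (F : K -> nat) :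
  \max_(i <- s) F i = 0 \/ exists2 k, k \in s & F k = \max_(i <- s) F i.
Proof.
elim: s => [|x s IH]; first by left; rewrite big_nil.
rewrite big_cons; case: (leqP (\max_(i <- s) F i) (F x)) => h.
  by right; exists x; rewrite ?mem_head.
case: IH => [e|[k ks e]]; first by rewrite e in h.
by right; exists k; rewrite // inE ks orbT.
Qed.

Lemma seqmin_mem x s : seqmin (x :: s) \in x :: s.
Proof.
rewrite /=; elim: s => [|y s IH] /=; first by rewrite inE.
case: (leqP y (foldr minn x s)) => h.
  by rewrite !inE eqxx orbT.
by move: IH; rewrite !inE => /orP[->//|->]; rewrite !orbT.
Qed.

Lemma Vbody_spec T r c : is_HVT T -> (r, c) \in domf T -> armE (getc T (r, c)) != [::] ->
  step_ok T (Vbody T r c) r c.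
Proof.
move=> hT pT Ane; rewrite /Vbody; cbv zeta.
set a := seqmax (armE (getc T (r, c))).
set col := [seq k <- keys T | k.2 == c.+1].
set bigger := filter _ (flatten _).
have colP k : (k \in col) = (k \in domf T) && (k.2 == c.+1).
  by rewrite mem_filter andbC.
have bigI k y : k \in domf T -> k.2 = c.+1 -> y \in entries (getc T k) -> a <= y ->
    y \in bigger.
  move=> kT k2 yk ay; rewrite mem_filter ay /=; apply/flatten_mapP.
  by exists k => //; rewrite colP kT k2 eqxx.
have bigP y : y \in bigger -> exists2 k, k \in col & y \in entries (getc T k).
  by rewrite mem_filter => /andP[_ /flatten_mapP].
case Eb: bigger => [|b0 bs] /=.
  have none k y : k \in domf T -> k.2 = c.+1 -> y \in entries (getc T k) -> y < a.
    move=> kT k2 yk; rewrite ltnNge; apply/negP => ay.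
    by have := bigI k y kT k2 yk ay; rewrite Eb.
  set rt := (\max_(k <- col) k.1).+1.
  have rows k : k \in domf T -> k.2 = c.+1 -> k.1 < rt.
    move=> kT k2; rewrite ltnS; apply: (@leq_bigmax_seq _ _ xpredT (fun k => k.1)) => //.
    by rewrite colP kT k2 eqxx.
  have qT : (rt, c.+1) \notin domf T.
    by apply/negP => /rows /(_ erefl); rewrite ltnn.
  have hrt : (rt == 1) || ((rt.-1, c.+1) \in domf T).
    rewrite /rt /=; case: (max_att col (fun k => k.1)) => [->|[k kc e]]; first by [].
    rewrite -e; move: kc; rewrite colP => /andP[kT /eqP k2].
    by case: k kT k2 {e} => k1 k2' kT /= e; subst k2'; rewrite /= kT orbT.
  case: ifP => [rtr|/negbFE/eqP rtr].
    exact: caseA_none.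
  clearbody rt; subst rt.
  exact: caseB_none.
set kk := seqmin (b0 :: bs).
have kkB : kk \in bigger by rewrite Eb seqmin_mem.
have akk : a <= kk by move: kkB; rewrite mem_filter => /andP[].
have kmin k y : k \in domf T -> k.2 = c.+1 -> y \in entries (getc T k) -> a <= y -> kk <= y.
  by move=> kT k2 yk ay; have := bigI k y kT k2 yk ay; rewrite Eb => /seqmin_le.
case Ef: [seq k <- col | kk \in entries (getc T k)] => [|k0 ks] /=.
  have [k kc kkk] := bigP kk kkB.
  have : k \in [seq k <- col | kk \in entries (getc T k)] by rewrite mem_filter kkk kc.
  by rewrite Ef.
have : k0 \in [seq k <- col | kk \in entries (getc T k)] by rewrite Ef mem_head.
rewrite mem_filter colP => /andP[kk0 /andP[k0T /eqP k02]].
case: k0 Ef kk0 k0T k02 => rt c' Ef kk0 k0T /= k02; subst c'.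
case: ifP => [rtr|/negbFE/eqP rtr]; first exact: caseA_some.
subst rt; exact: caseB_some.
Qed.

End PartG.
Section PartH.

Lemma argmax_mem (K : eqType) (f : K -> nat) s k : argmax f s = Some k -> k \in s.
Proof.
elim: s k => //= x s IH k; case E: (argmax f s) => [k'|] /=.
  case: ifP => _ [<-]; first exact: mem_head.
  by rewrite inE (IH _ E) orbT.
by move=> [<-]; exact: mem_head.
Qed.

Lemma argmax_none (K : Type) (f : K -> nat) s : argmax f s = None -> s = [::].
Proof. by case: s => //= x s; case: (argmax f s) => // k; case: ifP. Qed.

Lemma ae0_arms T : arm_excess T = 0 -> armkeys T = [::].
Proof.
move/eqP; rewrite /arm_excess sum_nat_seq_eq0 => /allP h.
rewrite /armkeys; apply/eqP; rewrite -(negbK (_ == _)) -has_filter; apply/negP.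
by case/hasP => k /h /= /eqP /size0nil ->.
Qed.

Lemma Vb_ae0 T : arm_excess T = 0 -> Vb T = T.
Proof. by move=> h; rewrite Vb_eq ae0_arms. Qed.

Definition wid (T : tab) := \max_(k <- keys T) k.2.

Lemma arm_col_wid T : arm_col T <= wid T.
Proof.
apply/bigmax_leqP_seq => k kA _; apply: (@leq_bigmax_seq _ _ xpredT (fun k => k.2)) => //.
by move: kA; rewrite mem_filter => /andP[].
Qed.

Lemma max_att' (K : eqType) (s : seq K) (F : K -> nat) : s != [::] ->
  exists2 k, k \in s & F k = \max_(i <- s) F i.
Proof.
case: (max_att s F) => [e|//]; case: s e => // x s e _; exists x; first exact: mem_head.
by apply/eqP; rewrite eqn_leq (@leq_bigmax_seq _ _ xpredT F x) ?mem_head // e.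
Qed.

Lemma Vb_pick T : is_HVT T -> 0 < arm_excess T ->
  exists r c, [/\ Vb T = Vbody T r c, (r, c) \in domf T,
                  armE (getc T (r, c)) != [::] & c = arm_col T].
Proof.
move=> hT ae0.
have : armkeys T != [::].
  apply/negP => /eqP e; move: ae0; rewrite lt0n; apply/negP; rewrite negbK.
  rewrite /arm_excess sum_nat_seq_eq0; apply/allP => k kT /=.
  case: eqP => // /eqP h.
  have : k \in armkeys T by rewrite mem_filter kT andbT; apply: contra h => /eqP ->.
  by rewrite e.
move=> nE.
set s := [seq k <- armkeys T | k.2 == arm_col T].
have sne : s != [::].
  case: (max_att' (fun k => k.2) nE) => k kA e.
  apply/negP => /eqP es.
  have : k \in s by rewrite mem_filter kA andbT; apply/eqP; exact: e.
  by rewrite es.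
case E: (argmax (fun k => seqmax (armE (getc T k))) s) => [[r c]|]; last first.
  by move/argmax_none: E => es; rewrite es in sne.
move/argmax_mem: (E) => rcs.
move: (rcs); rewrite mem_filter => /andP[/eqP /= ec]; rewrite mem_filter => /andP[ne rcT].
by exists r, c; split => //; rewrite Vb_eq -/s E.
Qed.

End PartH.

Lemma Vb_step T : is_HVT T -> 0 < arm_excess T ->
  [/\ is_HVT (Vb T), Vb T != T &
   (domf (Vb T) = domf T /\ arm_excess (Vb T) = arm_excess T /\ arm_col T < arm_col (Vb T))
   \/ (domf (Vb T) != domf T /\ arm_excess (Vb T) = (arm_excess T).-1)].
Proof.
move=> hT ae0; have [r [c [eV pT Ane ec]]] := Vb_pick hT ae0.
have [h1 h2 h3] := Vbody_spec hT pT Ane; rewrite eV; split => //.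
  apply/eqP => e; move: h2; rewrite e.
  have : 0 < size (armE (getc T (r, c))) by case: (armE _) Ane.
  lia.
case: h3 => [[d [e [k kT /andP[/eqP k2 kne]]]]|[d e]]; [left|right]; split => //.
split => //; rewrite -ec -k2.
by apply: (@leq_bigmax_seq _ _ xpredT (fun k => k.2)) => //; rewrite mem_filter kne.
Qed.

Lemma wid_dom T T' : domf T = domf T' -> wid T = wid T'.
Proof. by rewrite /wid /keys => ->. Qed.

Lemma V_stop_S T d : 0 < d -> V_stop T d.+1 = V_stop (Vb T) d.
Proof. by case: d => // d _; rewrite /V_stop /= -iterSr. Qed.

Lemma stop_ex n : forall T, is_HVT T -> 0 < arm_excess T ->
  wid T - arm_col T <= n -> exists2 d, 0 < d & V_stop T d.
Proof.
elim: n => [|n IH] T hT ae0 hn; have [hV neq [[d [e ac]]|[d e]]] := Vb_step hT ae0.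
- have := arm_col_wid (Vb T); rewrite (wid_dom d); lia.
- by exists 1 => //; rewrite /V_stop /= /Defs.shape d.
- have := arm_col_wid (Vb T); rewrite (wid_dom d) => acw.
  have [d' d'0 st] : exists2 d', 0 < d' & V_stop (Vb T) d'.
    by apply: IH => //; [rewrite e | rewrite (wid_dom d); lia].
  by exists d'.+1 => //; rewrite V_stop_S.
- by exists 1 => //; rewrite /V_stop /= /Defs.shape d.
Qed.

Lemma V_ex T : is_HVT T -> exists U, V_rel T U.
Proof.
move=> hT; case: (posnP (arm_excess T)) => [a0|apos].
  exists (Vb T), 1; split => //.
    by rewrite /V_stop /= Vb_ae0 // !eqxx orbT.
  by move=> d' /andP[h1 h2]; lia.
have [d d0 st] := stop_ex hT apos (leqnn _).
have exP : exists d, (0 < d) && V_stop T d by exists d; rewrite d0 st.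
case: (ex_minnP exP) => m /andP[m0 mst] mmin.
exists (iter m Vb T), m; split => //.
move=> d' /andP[d'0 d'm]; apply/negP => st'.
by have := mmin d' (introT andP (conj d'0 st')); lia.
Qed.

Lemma V_ok T U : is_HVT T -> 0 < arm_excess T -> V_rel T U ->
  is_HVT U /\ arm_excess U = (arm_excess T).-1.
Proof.
move=> hT ae0 [d [d0 st mn ->]].
have inv j : j < d -> [/\ is_HVT (iter j Vb T), arm_excess (iter j Vb T) = arm_excess T
                        & domf (iter j Vb T) = domf T].
  elim: j => [|j IH] lt; first by split.
  have [h1 h2 h3] := IH (ltnW lt).
  have := mn j.+1; rewrite lt /= => /(_ isT).
  rewrite /V_stop /= negb_or => /andP[/negPn/eqP sh ne].
  have [hV _ [[dd [e _]]|[dd _]]] := Vb_step h1 (ltac:(by rewrite h2)).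
    by split => //=; [rewrite e h2 | rewrite dd h3].
  by rewrite /Defs.shape in sh; rewrite sh eqxx in dd.
case: d d0 st mn inv => // j _ st mn inv.
have [h1 h2 h3] := inv j (ltnSn j).
have [hV ne [[dd [e _]]|[dd e]]] := Vb_step h1 (ltac:(by rewrite h2)).
  by move: st; rewrite /V_stop /= /Defs.shape dd eqxx (negPf ne).
by rewrite iterS e h2.
Qed.

Theorem corollary3p7 (T : tab) :
  is_HVT T ->
  (exists P, uncrowd_P T P) /\ (forall P, uncrowd_P T P -> is_set_valued P).
Proof.
move=> hT; split.
  have build n : n <= arm_excess T -> exists s : seq tab,
      [/\ size s = n.+1, nth T s 0 = T,
          (forall i, 0 < i <= n -> V_rel (nth T s i.-1) (nth T s i)),
          is_HVT (nth T s n) & arm_excess (nth T s n) = arm_excess T - n].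
    elim: n => [|n IH] hn.
      by exists [:: T]; split => //; [move=> i; lia | rewrite subn0].
    have [s [ss s0 sV sH sA]] := IH (ltnW hn).
    have [U hU] := V_ex sH.
    have [UH UA] := V_ok sH (ltac:(by rewrite sA; lia)) hU.
    exists (rcons s U); split.
    - by rewrite size_rcons ss.
    - by rewrite nth_rcons ss.
    - move=> i /andP[i0 iN]; rewrite !nth_rcons ss.
      case: (ltngtP i n.+1) iN => // [ilt|->] _.
        have -> : i.-1 < n.+1 by lia.
        by apply: sV; rewrite i0 /=; lia.
      by rewrite /= ltnSn.
    - by rewrite nth_rcons ss ltnn eqxx.
    - by rewrite nth_rcons ss ltnn eqxx UA sA; lia.
  have [s [ss s0 sV _ _]] := build _ (leqnn _).
  by exists (nth T s (arm_excess T)); exists s; split.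
move=> P [s [ss s0 sV ->]].
have inv i : i <= arm_excess T ->
    is_HVT (nth T s i) /\ arm_excess (nth T s i) = arm_excess T - i.
  elim: i => [|i IH] hi; first by rewrite s0 subn0.
  have [h1 h2] := IH (ltnW hi).
  have [U1 U2] := V_ok h1 (ltac:(by rewrite h2; lia)) (sV i.+1 (ltac:(by rewrite /= hi))).
  by split => //; rewrite U2 h2; lia.
have [h1 h2] := inv _ (leqnn _).
by rewrite /is_set_valued h1 h2 subnn.
Qed.
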